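(* Let $s,y\in\mathbb{R}^n$ with $s^Ty>0$, let $\tau\in[0,1]$, and for $\alpha>0$ define $$\phi_\tau(\alpha)=\Big\|\tau\Big(\tfrac{1}{\alpha}s-y\Big)+(1-\tau)(s-\alpha y)\Big\|^2 .$$ Let $\alpha^{BB1}=\dfrac{s^Ts}{s^Ty}$ and $\alpha^{BB2}=\dfrac{s^Ty}{y^Ty}$. Then the equation $\phi_\tau'(\alpha)=0$ has a unique root in the interval $[\alpha^{BB2},\alpha^{BB1}]$.
   Context: $\|\cdot\|$ denotes the Euclidean norm and $\phi_\tau'$ the derivative of $\phi_\tau$ with respect to $\alpha$. (Note $s^Ty>0$ forces $y\neq 0$, and by Cauchy–Schwarz $\alpha^{BB2}\le\alpha^{BB1}$.) *)

(* Defs.v *)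
From mathcomp Require Import all_boot all_order all_algebra.
From mathcomp Require Import all_classical all_reals all_analysis.
Set Implicit Arguments. Unset Strict Implicit. Unset Printing Implicit Defensive.
Import Order.TTheory GRing.Theory Num.Theory.
Local Open Scope ring_scope.

Definition dotv (R : realType) (n : nat) (u v : 'rV[R]_n) : R :=
  \sum_(i < n) u 0 i * v 0 i.

Definition sqnorm (R : realType) (n : nat) (v : 'rV[R]_n) : R := dotv v v.

Definition phi (R : realType) (n : nat) (tau : R) (s y : 'rV[R]_n) (alpha : R) : R :=
  sqnorm (tau *: (alpha^-1 *: s - y) + (1 - tau) *: (s - alpha *: y)).

Definition alphaBB1 (R : realType) (n : nat) (s y : 'rV[R]_n) : R := dotv s s / dotv s y.
Definition alphaBB2 (R : realType) (n : nat) (s y : 'rV[R]_n) : R := dotv s y / dotv y y.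

(* Main.v *)
Require Import Defs.
From mathcomp Require Import all_boot all_order all_algebra.
From mathcomp Require Import all_classical all_reals all_analysis.
From mathcomp Require Import ring lra.
Import Order.TTheory GRing.Theory Num.Theory.
Import numFieldNormedType.Exports.
Local Open Scope ring_scope.

Section Aux.
Context {R : realType}.

Lemma isdV (x : R) : x != 0 -> is_derive x 1 (fun y : R => y^-1) (- x ^-2).
Proof.
move=> x0; apply: DeriveDef.
  by apply: (@derivableV R R (@id R)) => //; exact: (@derivable_id R R x 1).
rewrite (@deriveV R R (@id R) x 1 x0 (@derivable_id R R x 1)) /= derive_id.
by rewrite /GRing.scale /= mulr1.
Qed.

Definition Fphi (t a b c : R) := fun y : R =>
  (t * y^-1 + (1 - t)) ^+ 2 * a - 2 * ((t * y^-1 + (1 - t)) * (t + (1 - t) * y)) * b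
  + (t + (1-t)*y)^+2 * c.

Lemma Fphi_derive (x t a b c : R) : x != 0 ->
  is_derive x 1 (Fphi t a b c)
   (a * (2 * (t / x + (1 - t)) ^+ 1 * (t * - x ^- 2)) -
    b * (2 * ((t / x + (1 - t)) * ((1 - t) * 1) + (t + (1 - t) * x) * (t * - x ^- 2))) +
    c * (2 * (t + (1 - t) * x) ^+ 1 * ((1 - t) * 1))).
Proof.
move=> x0.
have H := @isdV x x0.
have hp : is_derive x 1 (fun y : R => t * y^-1 + (1 - t)) (t *: - x^-2 + 0).
  exact: (is_deriveD (is_deriveZ t H) (is_derive_cst (1-t) x 1)).
have hq : is_derive x 1 (fun y : R => t + (1 - t) * y) (0 + (1-t) *: (1:R)).
  exact: (is_deriveD (is_derive_cst t x 1) (is_deriveZ (1-t) (is_derive_id x 1))).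
have h := is_deriveD (is_deriveB (is_deriveM (is_deriveX 2 hp) (is_derive_cst a x 1)) (is_deriveM (is_deriveM (is_derive_cst (2:R) x 1) (is_deriveM hp hq)) (is_derive_cst b x 1))) (is_deriveM (is_deriveX 2 hq) (is_derive_cst c x 1)).
set F := (X in is_derive _ _ X _) in h.
change F with (Fphi t a b c) in h.
apply: (is_derive_eq h).
rewrite /cst /= !scaler0 !add0r !addr0.
by rewrite /GRing.scale /=.
Qed.

Lemma derive1_Fphi (x t a b c : R) : 0 < x ->
  derive1 (Fphi t a b c) x =
  2 * (t + (1 - t) * x) * ((1-t) * x^+2 * (x * c - b) + t * (x * b - a)) / x^+3.
Proof.
move=> xp; have x0 : x != 0 by rewrite gt_eqF.
rewrite derive1E (@derive_val _ _ _ _ _ _ _ (Fphi_derive x t a b c x0)).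
by field.
Qed.

Lemma sqnorm_lin n (s y : 'rV[R]_n) (p q : R) :
  sqnorm (p *: s - q *: y) = p^+2 * dotv s s - 2 * (p * q) * dotv s y + q^+2 * dotv y y.
Proof.
rewrite /sqnorm /dotv !mulr_sumr -sumrB -big_split /=.
by apply: eq_bigr => i _; rewrite !mxE; ring.
Qed.

Lemma sqnorm_ge0 n (v : 'rV[R]_n) : 0 <= sqnorm v.
Proof. by apply: sumr_ge0 => i _; rewrite -expr2 sqr_ge0. Qed.

Lemma phiE n (t : R) (s y : 'rV[R]_n) :
  phi t s y = Fphi t (dotv s s) (dotv s y) (dotv y y).
Proof.
apply/funext => x; rewrite /phi /Fphi -sqnorm_lin; congr sqnorm.
by apply/rowP => i; rewrite !mxE; ring.
Qed.

End Aux.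

Theorem proposition1 (R : realType) (n : nat) (s y : 'rV[R]_n) (tau : R) :
  0 < dotv s y -> 0 <= tau <= 1 ->
  exists! alpha : R,
    alphaBB2 s y <= alpha <= alphaBB1 s y /\ derive1 (phi tau s y) alpha = 0.
Proof.
move=> bp /andP[t0 t1].
rewrite /alphaBB1 /alphaBB2 phiE.
set a := dotv s s; set b := dotv s y; set c := dotv y y.
have sl := sqnorm_lin n s y; rewrite -/a -/b -/c in sl.
have sg := @sqnorm_ge0 R n.
have a0 : 0 <= a by exact: sqnorm_ge0.
have c0 : 0 <= c by exact: sqnorm_ge0.
rewrite -/b in bp; clearbody a b c.
have cp : 0 < c.
  have := sg (b *: s - (a + 1) *: y).
  rewrite sl => h.
  rewrite lt0r c0 andbT; apply/negP => /eqP c00.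
  move: h; rewrite c00 mulr0 addr0 => h.
  have bb : 0 < b * b by apply: mulr_gt0.
  have : 0 <= a * (b * b) by rewrite mulr_ge0 // ltW.
  rewrite !expr2 in h => ?; nra.
have cs : b ^+ 2 <= a * c.
  have := sg (c *: s - b *: y).
  rewrite sl => h.
  have : 0 <= c * (a * c - b ^+ 2) by nra.
  by rewrite pmulr_rge0 // subr_ge0.
have ap : 0 < a by nra.
pose k := fun x : R => (1-tau) * x^+2 * (x * c - b) + tau * (x * b - a).
have key : forall x, 0 < x -> (derive1 (Fphi tau a b c) x = 0 <-> k x = 0).
  move=> x xp; rewrite derive1_Fphi //.
  have qp : 0 < tau + (1 - tau) * x by nra.
  split => [|kx0]; last by rewrite /k in kx0; rewrite kx0 mulr0 mul0r.
  move/eqP; rewrite mulf_eq0 invr_eq0 expf_eq0 /= (gt_eqF xp) orbF.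
  by rewrite !mulf_eq0 pnatr_eq0 /= (gt_eqF qp) /= => /eqP.
have le12 : b / c <= a / b.
  by rewrite ler_pdivrMr // mulrAC ler_pdivlMr // mulrC -expr2.
have lo : 0 < b / c by exact: divr_gt0.
have kuniq : forall x z, b / c <= x -> b / c <= z -> k x = 0 -> k z = 0 -> x = z.
  move=> x z hx hz kx kz.
  have cx : b <= c * x by rewrite -ler_pdivrMl // mulrC.
  have cz : b <= c * z by rewrite -ler_pdivrMl // mulrC.
  have xp : 0 < x by exact: lt_le_trans hx.
  have zp : 0 < z by exact: lt_le_trans hz.
  have id : k z - k x = (z - x) * ((1-tau) * ((c*z - b) * z + (c*x - b) * x + c*x*z) + tau * b).
    rewrite /k; ring.
  have m : 0 < (1-tau) * ((c*z - b) * z + (c*x - b) * x + c*x*z) + tau * b.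
    have h1 : 0 <= (c*z - b) * z + (c*x - b) * x by nra.
    have h2 : 0 < c * x * z by rewrite mulr_gt0 // mulr_gt0.
    move: h1 h2; set W := (c*z - b) * z + (c*x - b) * x; set V := c * x * z => h1 h2.
    have hW : 0 < W + V by lra.
    have e1 : 0 <= (1 - tau) * (W + V) by rewrite mulr_ge0 // ?subr_ge0 // ltW.
    have e2 : 0 <= tau * b by rewrite mulr_ge0 // ltW.
    case: (ltrP tau 1) => ht.
      have : 0 < (1 - tau) * (W + V) by rewrite mulr_gt0 // subr_gt0.
      lra.
    have -> : tau = 1 by lra.
    lra.
  move: id; rewrite kx kz subrr => /esym/eqP; rewrite mulf_eq0 (gt_eqF m) orbF subr_eq0.
  by move/eqP.
pose P : {poly R} := ((1-tau)*c)%:P * 'X^3 - ((1-tau)*b)%:P * 'X^2 + (tau*b)%:P * 'X - (tau*a)%:P.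
have kP : forall x, k x = P.[x].
  by move=> x; rewrite /P /k !hornerD !hornerN !hornerCM !hornerXn hornerX hornerC; ring.
have klo : k (b / c) <= 0.
  rewrite /k divfK ?gt_eqF // subrr mulr0 add0r.
  apply: mulr_ge0_le0 => //.
  by rewrite subr_le0 mulrAC ler_pdivrMr // -expr2.
have khi : 0 <= k (a / b).
  rewrite /k divfK ?gt_eqF // subrr mulr0 addr0.
  apply: mulr_ge0; first by apply: mulr_ge0; rewrite ?subr_ge0 ?sqr_ge0.
  by rewrite subr_ge0 mulrAC ler_pdivlMr // -expr2.
have [al hal kal] : exists2 al, al \in `[b / c, a / b] & P.[al] = 0.
  apply: IVT => //.
    have hc : continuous (horner P : R -> R) by move=> x; exact: continuous_horner.
    exact: continuous_subspaceT hc.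
  rewrite -!kP; apply/andP; split.
    by rewrite ge_min klo.
  by rewrite le_max khi orbT.
move: hal; rewrite in_itv /= => /andP[al1 al2].
have alp : 0 < al by exact: lt_le_trans al1.
exists al; split.
  split; first by rewrite al1 al2.
  by apply/key => //; rewrite kP.
move=> z [/andP[z1 z2] dz].
have zp : 0 < z by exact: lt_le_trans z1.
apply: kuniq => //; first by rewrite kP.
exact/(key z zp).
Qed.
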